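(* Let $n$ be a positive integer with $n \equiv 0 \pmod 6$. Let $\mathcal{H}$ be the collection of subgroups of $S_n$ consisting of: all stabilizers in $S_n$ of partitions of $\{1,\dots,n\}$ into two blocks of size $n/2$; the alternating group $A_n$; and, for each $1\le i\le n/3-1$, all setwise stabilizers in $S_n$ of $i$-element subsets of $\{1,\dots,n\}$. Then the union of the subgroups in $\mathcal{H}$ is all of $S_n$, i.e. $\mathcal{H}$ is a cover of $S_n$.
   Context: $S_n$ is the symmetric group on $\{1,\dots,n\}$. The stabilizer of a partition $\{B_1,B_2\}$ is the set of $g\in S_n$ with $\{B_1^g,B_2^g\}=\{B_1,B_2\}$ (a subgroup isomorphic to $S_{n/2}\wr S_2$); the setwise stabilizer of an $i$-subset is isomorphic to $S_i\times S_{n-i}$. A cover of a group is a collection of proper subgroups whose union is the group. *)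

(* Defs.v *)
From mathcomp Require Import all_boot all_fingroup all_solvable.
Set Implicit Arguments. Unset Strict Implicit. Unset Printing Implicit Defensive.
Local Open Scope group_scope.

(* S_n is {perm 'I_n}, acting on the points 'I_n = {0,...,n-1}. *)

Definition part_stab (n : nat) (B : {set 'I_n}) : {set {perm 'I_n}} :=
  [set g : {perm 'I_n} | [set g @: B; g @: (~: B)] == [set B; ~: B]].

Definition set_stab (n : nat) (A : {set 'I_n}) : {set {perm 'I_n}} :=
  [set g : {perm 'I_n} | g @: A == A].

Definition cover_family (n : nat) : {set {set {perm 'I_n}}} :=
  [set part_stab B | B : {set 'I_n} & #|B| == n %/ 2]
  :|: [set ('Alt_('I_n) : {set {perm 'I_n}})]
  :|: [set set_stab A | A : {set 'I_n} & (1 <= #|A| <= n %/ 3 - 1)].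

Definition is_cover (gT : finGroupType) (G : {set gT}) (C : {set {set gT}}) :=
  (forall H, H \in C -> group_set H /\ H \proper G) /\
  \bigcup_(H in C) H = G.

(* Main.v *)
Require Import Defs.
From mathcomp Require Import all_boot all_fingroup all_solvable.
From mathcomp Require Import zify.
Set Implicit Arguments. Unset Strict Implicit. Unset Printing Implicit Defensive.

Local Open Scope group_scope.
Section PermHelp.
Variable T : finType.
Implicit Types g : {perm T}.

Lemma imsetC_perm g (A : {set T}) : g @: (~: A) = ~: (g @: A).
Proof.
apply/setP=> y; rewrite -[y](permKV g) inE !mem_imset ?inE //; exact: perm_inj.
Qed.

Lemma imset_perm1 (A : {set T}) : (1 : {perm T}) @: A = A.
Proof. by rewrite (eq_imset _ (@perm1 T)) imset_id. Qed.

Lemma imset_permM g h (A : {set T}) : (g * h) @: A = h @: (g @: A).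
Proof. by rewrite -imset_comp; apply: eq_imset => x; rewrite permM. Qed.

Lemma porbit_g g x : porbit g (g x) = porbit g x.
Proof. by have := porbit_perm g 1 x; rewrite expg1. Qed.

Lemma porbit_stab g x : g @: porbit g x = porbit g x.
Proof.
apply/eqP; rewrite eqEcard card_imset ?leqnn ?andbT; last exact: perm_inj.
apply/subsetP => _ /imsetP[y Hy ->].
by rewrite porbit_sym porbit_g -porbit_sym.
Qed.

Lemma partition_porbits g : partition (porbits g) [set: T].
Proof.
apply/and3P; split.
- apply/eqP/setP=> x; rewrite inE; apply/bigcupP; exists (porbit g x).
    exact: imset_f. exact: porbit_id.
- apply/trivIsetP => _ _ /imsetP[x _ ->] /imsetP[y _ ->] Hne.
  apply/pred0P => z /=; apply/negP => /andP[Hx Hy]; move/negP: Hne; apply.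
  rewrite -eq_porbit_mem in Hx; rewrite -eq_porbit_mem in Hy.
  by rewrite -(eqP Hx) (eqP Hy).
- apply/imsetP => -[x _ H0]; have := porbit_id g x; by rewrite -H0 inE.
Qed.

Section Parity.
Variable g : {perm T}.
Definition rep x := odflt x [pick y in porbit g x].
Lemma rep_in x : rep x \in porbit g x.
Proof. rewrite /rep; case: pickP => [y Hy|H] /=; [exact: Hy | exact: porbit_id]. Qed.
Lemma rep_g x : rep (g x) = rep x.
Proof. rewrite /rep porbit_g; case: pickP => //= H; by have := H x; rewrite porbit_id. Qed.
Lemma porbit_rep x : porbit g (rep x) = porbit g x.
Proof. by apply/eqP; rewrite eq_porbit_mem rep_in. Qed.
Definition tr x := traject g (rep x) #|porbit g x|.
Definition idx x := index x (tr x).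
Lemma tr_g x : tr (g x) = tr x.
Proof. by rewrite /tr rep_g porbit_g. Qed.
Lemma x_in_tr x : x \in tr x.
Proof. by rewrite /tr -porbit_rep -porbit_traject porbit_sym rep_in. Qed.
Lemma idx_lt x : idx x < #|porbit g x|.
Proof. by have := x_in_tr x; rewrite -index_mem size_traject. Qed.
Lemma iter_idx x : iter (idx x) g (rep x) = x.
Proof. by rewrite -(nth_traject _ (idx_lt x)) -/(tr x) nth_index // x_in_tr. Qed.

Lemma idx_g x : ~~ odd #|porbit g x| -> odd (idx (g x)) = ~~ odd (idx x).
Proof.
move=> Hev; have Hlt := idx_lt x.
have Hu : uniq (tr x) by rewrite /tr -porbit_rep uniq_traject_porbit.
have Hgx : g x = iter (idx x).+1 g (rep x) by rewrite iterS iter_idx.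
rewrite /idx tr_g -/(idx x).
case: (ltngtP (idx x).+1 #|porbit g x|) => [Hl | Hgt | He].
- by rewrite Hgx -(nth_traject _ Hl (rep x)) /tr index_uniq ?size_traject //=.
- by move: Hgt; rewrite ltnNge Hlt.
- have Hr : g x = rep x.
    by rewrite Hgx He -porbit_rep iter_porbit.
  rewrite Hr /tr; case: #|porbit g x| He Hev => [//|l] /= He Hev.
  rewrite eqxx /=; case: He => ->; by rewrite negbK in Hev; rewrite Hev.
Qed.
End Parity.

Lemma even_orbits_flip g : (forall x, ~~ odd #|porbit g x|) ->
  exists B : {set T}, g @: B = ~: B /\ g @: (~: B) = B.
Proof.
move=> Hev; pose B : {set T} := [set x | odd (idx g x)]; exists B.
suff H : forall y, (y \in g @: B) = ~~ odd (idx g y).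
  split; apply/setP => y; first by rewrite H !inE.
  by rewrite imsetC_perm inE H negbK inE.
move=> y; rewrite -[y](permKV g) mem_imset ?inE; last exact: perm_inj.
by rewrite idx_g ?negbK.
Qed.

Lemma orbit_sizes g (m : nat) : #|T| = (3 * m)%N -> odd #|porbits g| ->
  (forall x, m <= #|porbit g x|) ->
  forall x, #|porbit g x| = m \/ #|porbit g x| = (3 * m)%N.
Proof.
move=> HT Hodd Hge x.
have Hsum := card_partition (partition_porbits g); rewrite cardsT HT in Hsum.
have Hx : porbit g x \in porbits g by exact: imset_f.
rewrite (bigD1 (porbit g x)) //= in Hsum.
have Hc : #|porbits g| = #|[set O | (O \in porbits g) && (O != porbit g x)]|.+1.
  rewrite (cardsD1 (porbit g x)) Hx add1n; congr (_.+1); apply: eq_card => O.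
  by rewrite !inE andbC.
have Hlo : \sum_(O | (O \in porbits g) && (O != porbit g x)) m <=
           \sum_(O | (O \in porbits g) && (O != porbit g x)) #|O|.
  by apply: leq_sum => O /andP[/imsetP[y _ ->] _]; exact: Hge.
have Hhi : \sum_(O | (O \in porbits g) && (O != porbit g x)) #|O| <=
           \sum_(O | (O \in porbits g) && (O != porbit g x)) (3 * m)%N.
  by apply: leq_sum => O _; rewrite -HT max_card.
rewrite !sum_nat_cond_const in Hlo Hhi.
move: Hodd Hlo Hhi Hsum; rewrite Hc.
set c := #|_|; set R := \sum_(_ | _) _.
have := Hge x; set o := #|porbit g x|.
case: c => [|[|c]] /= Hm Hodd Hlo Hhi Hsum.
- right; lia.
- by [].
- left; nia.
Qed.
End PermHelp.

Lemma set2_eqC (T : finType) (X B : {set T}) :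
  ([set X; ~: X] == [set B; ~: B]) = (X == B) || (X == ~: B).
Proof.
case: (eqVneq X B) => [->|HXB]; first by rewrite eqxx.
case: (eqVneq X (~: B)) => [->|HXC]; first by rewrite setCK setUC eqxx.
apply/negbTE/negP => /eqP H.
have : X \in [set X; ~: X] by rewrite !inE eqxx.
by rewrite H !inE (negbTE HXB) (negbTE HXC).
Qed.

Lemma part_stabE n (B : {set 'I_n}) (g : {perm 'I_n}) :
  (g \in part_stab B) = (g @: B == B) || (g @: B == ~: B).
Proof. by rewrite inE imsetC_perm set2_eqC. Qed.

Lemma part_stab_cover n (B : {set 'I_n}) : 3 <= #|B| -> 3 <= #|~: B| ->
  group_set (part_stab B) /\ part_stab B \proper [set: {perm 'I_n}].
Proof.
move=> HB HC; split.
- apply/group_setP; split; first by rewrite part_stabE imset_perm1 eqxx.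
  move=> g h; rewrite !part_stabE imset_permM => /orP[/eqP->|/eqP->]
    /orP[/eqP Hh|/eqP Hh]; by rewrite ?imsetC_perm Hh ?setCK eqxx ?orbT.
- rewrite properT; apply/eqP => HT.
  have /card_gt1P[b [b' [Hb Hb' Hbb']]] : 1 < #|B| by apply: leq_trans HB.
  have /card_gt0P[c Hc] : 0 < #|~: B| by apply: leq_trans HC.
  have Hbc : b != c by apply: contraTneq Hc => <-; rewrite inE Hb.
  have Hb'c : b' != c by apply: contraTneq Hc => <-; rewrite inE Hb'.
  have : tperm b c \in part_stab B by rewrite HT inE.
  rewrite part_stabE => /orP[/eqP H|/eqP H].
  + have : c \in tperm b c @: B by rewrite -{1}(tpermL b c) imset_f.
    by rewrite H; move: Hc; rewrite inE => /negbTE ->.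
  + have : b' \in tperm b c @: B.
      have Hcb' : c != b' by rewrite eq_sym.
      by rewrite -{1}(tpermD Hbb' Hcb') imset_f.
    by rewrite H inE Hb'.
Qed.

Lemma set_stab_cover n (A : {set 'I_n}) : 0 < #|A| < n ->
  group_set (set_stab A) /\ set_stab A \proper [set: {perm 'I_n}].
Proof.
move=> /andP[HA HAn]; split.
- apply/group_setP; split; first by rewrite inE imset_perm1 eqxx.
  by move=> g h; rewrite !inE imset_permM => /eqP-> /eqP->.
- rewrite properT; apply/eqP => HT.
  have /card_gt0P[a Ha] := HA.
  have /card_gt0P[c Hc] : 0 < #|~: A|.
    by have := cardsC A; rewrite card_ord; lia.
  have : tperm a c \in set_stab A by rewrite HT inE.
  rewrite inE => /eqP H.
  have : c \in tperm a c @: A by rewrite -{1}(tpermL a c) imset_f.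
  by rewrite H; move: Hc; rewrite inE => /negbTE ->.
Qed.

Close Scope group_scope.

Theorem lemma3p3 (n : nat) (n_gt0 : 0 < n) (n_mod6 : n %% 6 = 0) :
  is_cover [set: {perm 'I_n}] (cover_family n).
Proof.
have Hn6 : 6 <= n by lia.
split.
- move=> H; rewrite !in_setU in_set1 => /orP[/orP[/imsetP[B HB ->] | /eqP ->] | /imsetP[A HA ->]].
  + rewrite inE in HB; apply: part_stab_cover.
      by rewrite (eqP HB); lia.
    by have := cardsC B; rewrite card_ord (eqP HB); lia.
  + split; first exact: groupP.
    rewrite properT; apply/eqP => HT.
    have /card_gt1P[x [y [_ _ Hxy]]] : 1 < #|[set: 'I_n]| by rewrite cardsT card_ord; lia.
    have : tperm x y \in ('Alt_('I_n))%g by rewrite HT inE.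
    by rewrite Alt_even odd_tperm Hxy.
  + rewrite inE in HA; apply: set_stab_cover.
    by move: HA => /andP[H1 H2]; apply/andP; split; lia.
- apply/setP => g; rewrite inE; apply/bigcupP.
  case Hg: (g \in ('Alt_('I_n))%g).
    by exists (('Alt_('I_n))%g : {set {perm 'I_n}}); rewrite // !in_setU in_set1 eqxx orbT.
  have Hodd : odd_perm g by move: Hg; rewrite Alt_even => /negbFE.
  case: (boolP [exists x, #|porbit g x| < n %/ 3]) => [/existsP[x Hx] | Hnone].
    exists (set_stab (porbit g x)); last by rewrite inE porbit_stab eqxx.
    rewrite !in_setU; apply/orP; right; apply/imsetP; exists (porbit g x) => //.
    rewrite inE; have := card_porbit_neq0 g x; move: Hx; set o := #|_|.
    move=> Hx Hne; apply/andP; split; lia.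
  have Hall0 : forall x, n %/ 3 <= #|porbit g x|.
    move=> x; move/existsPn: Hnone => /(_ x); by rewrite -leqNgt.
  have Hodd' : odd #|porbits g|.
    by move: Hodd; rewrite /odd_perm card_ord (_ : odd n = false) //; lia.
  have Hsz := orbit_sizes (m := n %/ 3) (g := g) ltac:(rewrite card_ord; lia) Hodd' Hall0.
  have Hev : forall x, ~~ odd #|porbit g x|.
    by move=> x; case: (Hsz x) => ->; apply/negP; lia.
  have [B [HB1 HB2]] := even_orbits_flip Hev.
  have HcB : #|B| = n %/ 2.
    have := cardsC B; rewrite card_ord -HB1 card_imset; last exact: perm_inj.
    lia.
  exists (part_stab B); last by rewrite part_stabE HB1 eqxx orbT.
  rewrite !in_setU; apply/orP; left; apply/orP; left.
  by apply/imsetP; exists B; rewrite // inE HcB.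
Qed.
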